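(* There exists no real polynomial $P(x)=a_{11}x^{11}+a_{10}x^{10}+\cdots+a_0$ with $a_{11}>0$, $a_{10},a_9,a_8,a_7,a_6<0$, $a_5,a_4,a_3,a_2,a_1>0$, $a_0<0$, which has a single positive root, this root being simple, negative roots of total multiplicity $8$ (counted with multiplicity), and a pair of complex conjugate non-real roots with nonpositive real part. *)

(* Defs.v *)
From HB Require Import structures.
From mathcomp Require Import all_boot all_order all_algebra.
From mathcomp Require Import reals complex.
Set Implicit Arguments. Unset Strict Implicit. Unset Printing Implicit Defensive.
Import Order.TTheory GRing.Theory Num.Theory.
Local Open Scope ring_scope.

Section Defs.
Variable R : realType.

Definition single_simple_pos_root (P : {poly R}) : Prop :=
  exists x : R, [/\ 0 < x, root P x,
    (forall y : R, 0 < y -> root P y -> y = x) & mup x P = 1%N].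

Definition neg_roots_mult (P : {poly R}) (n : nat) : Prop :=
  exists s : seq R, [/\ uniq s,
    (forall x : R, (x \in s) = (x < 0) && root P x) &
    (\sum_(x <- s) mup x P)%N = n].

Definition nonreal_pair_nonpos_re (P : {poly R}) : Prop :=
  exists z : R[i], [/\ Im z != 0, Re z <= 0,
    root (map_poly (real_complex R) P) z &
    root (map_poly (real_complex R) P) (conjc z)].
End Defs.

(* Main.v *)
Require Import Defs.
From HB Require Import structures.
From mathcomp Require Import all_boot all_order all_algebra.
From mathcomp Require Import reals complex.
From mathcomp Require Import ring lra.
Import Order.TTheory GRing.Theory Num.Theory.
Local Open Scope ring_scope.

Section Aux.
Variable R : realType.

Definition LC (p : {poly R}) :=
  (forall k, (k < size p)%N -> 0 < p`_k) /\
  (forall k, p`_k * p`_k.+2 <= p`_k.+1 ^+ 2).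

Lemma LC_ge0 {p} : LC p -> forall k, 0 <= p`_k.
Proof.
move=> [Hp _] k; case: (ltnP k (size p)) => hk; first exact/ltW/Hp.
by rewrite nth_default.
Qed.

Lemma LC_aux {p} m : LC p -> p`_m * p`_m.+3 <= p`_m.+1 * p`_m.+2.
Proof.
move=> hp; have g := LC_ge0 hp; case: hp => Hp Hl.
case: (ltnP m.+2 (size p)) => hk; last first.
  by rewrite [p`_m.+3]nth_default ?mulr0 ?mulr_ge0 //; apply: leq_trans hk _.
have b0 : 0 < p`_m.+1 by apply: Hp; apply: ltn_trans hk.
have c0 : 0 < p`_m.+2 by apply: Hp.
have h1 := Hl m. have h2 := Hl m.+1.
have a0 := g m. have d0 := g m.+3.
nra.
Qed.

Lemma LC_mul {p} (y : R) : 0 < y -> LC p -> LC (p * ('X + y%:P)).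
Proof.
move=> y0 hp; have g := LC_ge0 hp.
have ha m := LC_aux m hp.
case: hp => Hp Hl.
have cE k : (p * ('X + y%:P))`_k = (if k is k'.+1 then p`_k' else 0) + p`_k * y.
  by rewrite mulrDr coefD coefMX coefMC; case: k.
have [->|p0] := eqVneq p 0.
  by rewrite mul0r; split => [k|k]; rewrite ?size_poly0 // !coef0 mul0r expr2 mul0r.
split.
  have s2 : size ('X + y%:P) = 2%N by exact: size_XaddC.
  have -> : size (p * ('X + y%:P)) = (size p).+1 by rewrite size_Mmonic ?monicXaddC // ?size_XaddC ?addn2.
  move=> k hk.
  rewrite cE; case: k hk => [|k] hk.
    by rewrite add0r mulr_gt0 // Hp // size_poly_gt0.
  have := Hp k hk; have := g k.+1; nra.
move=> [|m]; rewrite !cE /=.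
  have h1 : 0 <= y * y * (p`_1 ^+ 2 - p`_0 * p`_2).
    by apply: mulr_ge0; [apply: mulr_ge0; exact: ltW | rewrite subr_ge0 Hl].
  have h2 : 0 <= y * (p`_0 * p`_1) by apply: mulr_ge0; [exact: ltW | apply: mulr_ge0].
  have h3 : 0 <= p`_0 ^+ 2 by rewrite sqr_ge0.
  rewrite -subr_ge0.
  have -> : (p`_0 + p`_1 * y) ^+ 2 - (0 + p`_0 * y) * (p`_1 + p`_2 * y) =
     p`_0 ^+ 2 + y * (p`_0 * p`_1) + y * y * (p`_1 ^+ 2 - p`_0 * p`_2) by ring.
  by rewrite !addr_ge0.
have h1 : 0 <= y * y * (p`_m.+2 ^+ 2 - p`_m.+1 * p`_m.+3).
  by apply: mulr_ge0; [apply: mulr_ge0; exact: ltW | rewrite subr_ge0 Hl].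
have h2 : 0 <= y * (p`_m.+1 * p`_m.+2 - p`_m * p`_m.+3).
  by apply: mulr_ge0; [exact: ltW | rewrite subr_ge0 ha].
have h4 : 0 <= y * (p`_m.+1 * p`_m.+2) by apply: mulr_ge0; [exact: ltW | apply: mulr_ge0].
have h3 : 0 <= p`_m.+1 ^+ 2 - p`_m * p`_m.+2 by rewrite subr_ge0 Hl.
rewrite -subr_ge0.
have -> : (p`_m.+1 + p`_m.+2 * y) ^+ 2 - (p`_m + p`_m.+1 * y) * (p`_m.+2 + p`_m.+3 * y) =
   (p`_m.+1 ^+ 2 - p`_m * p`_m.+2) + y * (p`_m.+1 * p`_m.+2 - p`_m * p`_m.+3)
   + y * y * (p`_m.+2 ^+ 2 - p`_m.+1 * p`_m.+3) by ring.
by apply: addr_ge0 => //; apply: addr_ge0.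
Qed.


Lemma LC1 : LC 1.
Proof.
split => [k|k]; first by rewrite size_poly1 ltnS leqn0 => /eqP ->; rewrite coefC ltr01.
by rewrite !coefC /= mulr0 expr2 mulr0.
Qed.

Lemma LC_exp {p} (x : R) n : x < 0 -> LC p -> LC (('X - x%:P) ^+ n * p).
Proof.
move=> x0 hp; elim: n => [|n IH]; first by rewrite expr0 mul1r.
have E : ('X - x%:P) = ('X + (-x)%:P) by rewrite polyCN.
rewrite exprS -mulrA mulrC {2}E.
by apply: LC_mul => //; rewrite oppr_gt0.
Qed.

Lemma LC_prod (s : seq R) (m : R -> nat) : (forall x, x \in s -> x < 0) ->
  LC (\prod_(x <- s) ('X - x%:P) ^+ m x).
Proof.
elim: s => [|x s IH] hs; first by rewrite big_nil; exact: LC1.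
rewrite big_cons; apply: LC_exp; first by apply: hs; rewrite mem_head.
by apply: IH => y ys; apply: hs; rewrite in_cons ys orbT.
Qed.

Lemma LC_chain {p} (x0 : R) : LC p -> 0 < x0 -> x0 * p`_1 < p`_0 ->
  forall k, (k.+1 < size p)%N -> x0 * p`_k.+1 < p`_k.
Proof.
move=> hp x0p h0; have g := LC_ge0 hp; case: hp => Hp Hl.
elim => [//|k IH] hk.
have hk' : (k.+1 < size p)%N by apply: ltn_trans hk.
have := IH hk'; have := Hl k; have b0 := Hp _ hk'; have c0 := Hp _ hk.
have := g k. nra.
Qed.

Lemma monic_prod_mup (s : seq R) (m : R -> nat) :
  \prod_(x <- s) ('X - x%:P) ^+ m x \is monic.
Proof. by apply: monic_prod => x _; apply/monic_exp/monicXsubC. Qed.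

Lemma size_prod_mup (s : seq R) (m : R -> nat) :
  size (\prod_(x <- s) ('X - x%:P) ^+ m x) = (\sum_(x <- s) m x).+1.
Proof.
elim: s => [|x s IH]; first by rewrite !big_nil size_poly1.
rewrite !big_cons size_Mmonic ?monic_prod_mup ?IH ?size_exp_XsubC //.
  by rewrite addSn addnS.
by rewrite monic_neq0 // monic_exp // monicXsubC.
Qed.

Lemma dvd_prod_mup (s : seq R) (P : {poly R}) : uniq s -> P != 0 ->
  \prod_(x <- s) ('X - x%:P) ^+ mup x P %| P.
Proof.
elim: s P => [|x s IH] P /=; first by rewrite big_nil dvd1p.
move=> /andP[xs us] P0.
have : ('X - x%:P) ^+ mup x P %| P by rewrite -mup_geq.
case/dvdpP => q Pq.
have q0 : q != 0 by apply: contraNneq P0 => q0; rewrite Pq q0 mul0r.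
rewrite big_cons.
have -> : \prod_(y <- s) ('X - y%:P) ^+ mup y P = \prod_(y <- s) ('X - y%:P) ^+ mup y q.
  apply: eq_big_seq => y ys; rewrite Pq mupMl //.
  case: (mup x P) => [|n]; first by rewrite expr0 root1.
  rewrite root_exp_XsubC; apply: contraNN xs => /eqP <-; exact: ys.
rewrite [X in _ %| X]Pq mulrC; apply: dvdp_mul; [exact: IH | exact: dvdpp].
Qed.

End Aux.

Lemma nonreal_ne {R : realType} {z : R[i]} {y : R} : 'Im z != 0 -> z != (y%:C)%C.
Proof. by apply: contraNneq => ->; rewrite -complexIm /=. Qed.

Theorem lemma5 (R : realType) (P : {poly R}) :
  size P = 12%N ->
  0 < P`_11 ->
  P`_10 < 0 -> P`_9 < 0 -> P`_8 < 0 -> P`_7 < 0 -> P`_6 < 0 ->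
  0 < P`_5 -> 0 < P`_4 -> 0 < P`_3 -> 0 < P`_2 -> 0 < P`_1 ->
  P`_0 < 0 ->
  ~ [/\ single_simple_pos_root P, neg_roots_mult P 8 & nonreal_pair_nonpos_re P].
Proof.
move=> sP h11 h10 h9 h8 h7 h6 h5 h4 h3 h2 h1 h0.
case=> [[x0 [x0p rx0 _ mx0]] [s [us sE ssum]] [z [Imz Rez rz _]]].
have P0 : P != 0 by rewrite -size_poly_gt0 sP.
have x0s : x0 \notin s by rewrite sE ltNge (ltW x0p).
set Rp := \prod_(x <- s) ('X - x%:P) ^+ mup x P.
have dD : ('X - x0%:P) * Rp %| P.
  have := @dvd_prod_mup R (x0 :: s) P; rewrite big_cons mx0 expr1; apply => //=.
  by rewrite x0s us.
have sR : size Rp = 9%N by rewrite (@size_prod_mup R) ssum.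
have mD : ('X - x0%:P) * Rp \is monic by rewrite monicMl ?monicXsubC ?(@monic_prod_mup R).
have sD : size (('X - x0%:P) * Rp) = 10%N.
  by rewrite size_Mmonic ?(@monic_prod_mup R) ?monic_neq0 ?monicXsubC // size_XsubC sR.
set D := ('X - x0%:P) * Rp in dD mD sD.
set Q := P %/ D.
have PQ : P = Q * D by rewrite divpK.
have Q0 : Q != 0 by apply: contraNneq P0 => q0; rewrite PQ q0 mul0r.
have sQ : size Q = 3%N.
  have := sP; rewrite PQ size_Mmonic // sD addnS /= => h.
  by apply/eqP; rewrite -(eqn_add2r 9) h.
have q2 : 0 < Q`_2.
  have : lead_coef P = lead_coef Q by rewrite PQ lead_coefM (monicP mD) mulr1.
  by rewrite !lead_coefE sP sQ /= => <-.
have rQ : root (map_poly (real_complex R) Q) z.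
  move: rz; rewrite PQ rmorphM /= rootM => /orP[//|rD]; exfalso.
  move: rD; rewrite /root /D rmorphM rmorph_prod /= hornerM horner_prod mulf_eq0.
  case/orP.
    by rewrite map_polyXsubC hornerXsubC subr_eq0 (negbTE (nonreal_ne Imz)).
  rewrite prodf_seq_eq0 => /hasP[y _] /=.
  rewrite rmorphXn /= map_polyXsubC horner_exp hornerXsubC expf_eq0 subr_eq0.
  by rewrite (negbTE (nonreal_ne Imz)) andbF.
have E : ((Q`_0)%:C + (Q`_1)%:C * z + (Q`_2)%:C * z ^+ 2 = 0)%C.
  move: rQ; rewrite /root horner_coef size_map_poly sQ !big_ord_recr big_ord0 /=.
  rewrite !coef_map /= add0r expr0 mulr1 expr1 => /eqP.
  done.
case: z Imz Rez {rz rQ} E => u v Imz Rez E.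
have v0 : v != 0.
  by move: Imz; rewrite -complexIm /=; apply: contraNneq => ->.
have u0 : u <= 0.
  by move: Rez; rewrite -complexRe /= -[X in _ <= X]/(((0:R)%:C)%C) lecR.
have EI := congr1 (@complex.Im R) E.
have ER := congr1 (@complex.Re R) E.
move: EI ER; rewrite /=; simpc => EI ER.
have q1E : Q`_1 = - (2 * u * Q`_2).
  have : (Q`_1 + 2 * u * Q`_2) * v = Q`_1 * v + Q`_2 * (u * v + v * u) by ring.
  rewrite EI.
  by move/eqP; rewrite mulf_eq0 (negbTE v0) orbF addr_eq0 => /eqP.
have hv : 0 < v * v by rewrite -expr2 exprn_even_gt0.
have q1 : 0 <= Q`_1 by rewrite q1E; nra.
have q0 : 0 < Q`_0.
  have a1 : 0 < Q`_2 * (v * v) by apply: mulr_gt0.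
  have a2 : 0 <= Q`_2 * (u * u) by apply: mulr_ge0; [exact: ltW | rewrite -expr2 sqr_ge0].
  move: ER; rewrite q1E => ER.
  nra.
have TE k : D`_k = (if k is k'.+1 then Rp`_k' else 0) - x0 * Rp`_k.
  by rewrite /D mulrBl coefB coefXM coefCM; case: k.
have QE : Q = (Q`_0)%:P + (Q`_1)%:P * 'X + (Q`_2)%:P * 'X^2.
  apply/polyP => i; rewrite !coefD !coefCM coefC coefX coefXn.
  case: i => [|[|[|i]]] /=; rewrite ?mulr0 ?mulr1 ?addr0 ?add0r //.
  by rewrite nth_default ?sQ.
have PE k : P`_k.+2 = Q`_0 * D`_k.+2 + Q`_1 * D`_k.+1 + Q`_2 * D`_k.
  by rewrite [in LHS]PQ [in LHS]QE !mulrDl !coefD -!mulrA !coefCM ?coefXnM !coefXM /= ?coefXM.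
have P1 : P`_1 = Q`_0 * D`_1 + Q`_1 * D`_0.
  by rewrite [in LHS]PQ [in LHS]QE !mulrDl !coefD -!mulrA !coefCM ?coefXnM !coefXM /= ?coefXM /= mulr0 addr0.
have LR : LC R Rp by apply: LC_prod => x; rewrite sE => /andP[].
have g := @LC_ge0 R _ LR.
have c0 : x0 * Rp`_1 < Rp`_0.
  move: h1; rewrite P1 !TE /= => h.
  have : 0 <= Q`_1 * (x0 * Rp`_0) by apply: mulr_ge0 => //; apply: mulr_ge0 (ltW x0p) (g 0).
  nra.
have ch := @LC_chain R _ x0 LR x0p c0.
have s3 : (4 < size Rp)%N by rewrite sR.
have s4 : (5 < size Rp)%N by rewrite sR.
have s5 : (6 < size Rp)%N by rewrite sR.
have c3 := ch 3 s3. have c4 := ch 4 s4. have c5 := ch 5 s5.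
move: h6; rewrite PE !TE /=.
nra.
Qed.
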